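(* Let $n\ge1$ and let $f=2x_1\cdots x_n\left(\sum_{i=1}^n b_ix_i+c\right)$ with $b_i\in\{0,1\}$, $c\in\{0,1\}$, and $b_j=1$ for some $j$. Let $K=\{j\mid b_j=1\}$. Then: (i) if $K=\{1,\dots,n\}$, then $f=2t_n$ or $f=2s_n$; (ii) if $1\le|K|<n$, then $2v_n\in C(f)$; (iii) if $1\le|K|<n$ and $|K|$ is even, then $C(f)=C(2v_n)$ or $C(f)=C(2v_n)\vee C(2r_n)$; (iv) if $1\le|K|<n$ and $|K|$ is odd, then $C(f)=C(2u_n)$ or $C(f)=C(2p_n)$.
   Context: All operations are on $\mathbb{Z}_8$; $\vee$ is the join in the lattice of clones on $\mathbb{Z}_8$. For an operation $f$, $C(f)$ denotes the clone generated by $f$ together with binary addition and all unary constant operations. For $n\ge1$: $r_n=x_1\cdots x_n$; $t_n=x_1\cdots x_n(x_1+\dots+x_n)$ if $n$ is even and $t_n=x_1\cdots x_n(x_1+\dots+x_n+1)$ if $n$ is odd; $s_n=x_1\cdots x_n(x_1+\dots+x_n)$ if $n$ is odd and $s_n=x_1\cdots x_n(x_1+\dots+x_n+1)$ if $n$ is even; $p_n=x_1^2x_2\cdots x_n$; $u_n=x_1\cdots x_n(x_1+1)$; for $n\ge2$, $v_n=x_1\cdots x_n(x_1+x_2)$. *)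

(* Defs.v *)
From mathcomp Require Import all_boot all_order all_algebra.
Set Implicit Arguments. Unset Strict Implicit. Unset Printing Implicit Defensive.
Import GRing.Theory.
Local Open Scope ring_scope.

Definition Z8 := 'Z_8.

(* a k-ary operation on Z_8; arguments are indexed by 'I_k (x_1..x_k = x 0 .. x (k-1)) *)
Definition op (k : nat) := ('I_k -> Z8) -> Z8.
Definition arity_op := {k : nat & op k}.

Definition opset := forall k : nat, op k -> Prop.

Inductive clone_gen (I : Type) (F : I -> arity_op) : forall k : nat, op k -> Prop :=
| cg_gen (i : I) : @clone_gen I F (projT1 (F i)) (projT2 (F i))
| cg_proj k (i : 'I_k) : @clone_gen I F k (fun x => x i)
| cg_comp k m (h : op m) (gs : 'I_m -> op k) :
    @clone_gen I F m h -> (forall j, @clone_gen I F k (gs j)) ->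
    @clone_gen I F k (fun x => h (fun j => gs j x))
| cg_ext k (g g' : op k) : @clone_gen I F k g -> (forall x, g x = g' x) -> @clone_gen I F k g'.

Definition add_op : op 2 := fun x => x ord0 + x ord_max.
Definition const_op (a : Z8) : op 1 := fun _ => a.

Definition C_gens (f : arity_op) (i : option (option Z8)) : arity_op :=
  match i with
  | None => f
  | Some None => existT _ 2 add_op
  | Some (Some a) => existT _ 1 (const_op a)
  end.

Definition C (k : nat) (f : op k) : opset := @clone_gen _ (C_gens (existT _ k f)).

Definition clone_join (A B : opset) : opset :=
  @clone_gen _ (fun o : {o : arity_op | A (projT1 o) (projT2 o) \/ B (projT1 o) (projT2 o)} =>
               sval o).

Definition clone_eq (A B : opset) : Prop := forall k (g : op k), A k g <-> B k g.

(* the variable x_{i+1} (0 if out of range; only used for in-range i) *)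
Definition var n (x : 'I_n -> Z8) (i : nat) : Z8 :=
  if insub i is Some j then x j else 0.

Definition prodx n (x : 'I_n -> Z8) : Z8 := \prod_(i < n) x i.
Definition sumx n (x : 'I_n -> Z8) : Z8 := \sum_(i < n) x i.

Definition r_op n : op n := fun x => prodx x.
Definition t_op n : op n := fun x =>
  if odd n then prodx x * (sumx x + 1) else prodx x * sumx x.
Definition s_op n : op n := fun x =>
  if odd n then prodx x * sumx x else prodx x * (sumx x + 1).
Definition p_op n : op n := fun x => var x 0 * prodx x.
Definition u_op n : op n := fun x => prodx x * (var x 0 + 1).
Definition v_op n : op n := fun x => prodx x * (var x 0 + var x 1).

Definition dbl n (g : op n) : op n := fun x => 2%:R * g x.

Definition f_op n (b : 'I_n -> bool) (c : bool) : op n := fun x =>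
  2%:R * prodx x * (\sum_(i < n) (b i)%:R * x i + (c : nat)%:R).

(* Main.v *)
Require Import Defs.
From mathcomp Require Import all_boot all_order all_algebra all_fingroup.
From mathcomp Require Import ring.
Set Implicit Arguments. Unset Strict Implicit. Unset Printing Implicit Defensive.
Import GRing.Theory.
Local Open Scope ring_scope.

Lemma z8 : forall a : Z8, a *+ 8 = 0.
Proof. by case=> [[|[|[|[|[|[|[|[|m]]]]]]]] Hm] //; apply/val_inj. Qed.
Lemma z7 : forall a : Z8, a *+ 7 = -a.
Proof. by case=> [[|[|[|[|[|[|[|[|m]]]]]]]] Hm] //; apply/val_inj. Qed.

Lemma cg_mono (I J : Type) (F : I -> arity_op) (G : J -> arity_op) :
  (forall i, clone_gen G (projT2 (F i))) ->
  forall k (g : op k), clone_gen F g -> clone_gen G g.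
Proof.
move=> HF k g; elim => {k g}.
- by [].
- move=> k i; exact: cg_proj.
- move=> k m h gs _ Hh _ Hgs; exact: cg_comp.
- move=> k g g' _ Hg Heq; exact: cg_ext Hg Heq.
Qed.

Lemma cl_add (I : Type) (F : I -> arity_op) k (g1 g2 : op k) :
  clone_gen F add_op -> clone_gen F g1 -> clone_gen F g2 ->
  clone_gen F (fun x => g1 x + g2 x).
Proof.
move=> Ha H1 H2.
pose gs : 'I_2 -> op k := fun j => if j == ord0 then g1 else g2.
apply: (cg_ext (cg_comp (gs := gs) Ha _)).
  by move=> j; rewrite /gs; case: ifP.
by move=> x; rewrite /add_op /gs /=.
Qed.

Lemma cl_muln (I : Type) (F : I -> arity_op) k (g : op k) m :
  clone_gen F add_op -> clone_gen F g -> clone_gen F (fun x => g x *+ m.+1).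
Proof.
move=> Ha Hg; elim: m => [|m IH].
  by apply: (cg_ext Hg) => x; rewrite mulr1n.
by apply: (cg_ext (cl_add Ha IH Hg)) => x /=; rewrite [RHS]mulrSr.
Qed.

Lemma cl_neg (I : Type) (F : I -> arity_op) k (g : op k) :
  clone_gen F add_op -> clone_gen F g -> clone_gen F (fun x => - g x).
Proof.
move=> Ha Hg; apply: (cg_ext (cl_muln 6 Ha Hg)) => x; exact: z7.
Qed.

Lemma cl_zero (I : Type) (F : I -> arity_op) k (g : op k) :
  clone_gen F add_op -> clone_gen F g -> clone_gen F (fun x : 'I_k -> Z8 => 0).
Proof.
move=> Ha Hg; apply: (cg_ext (cl_muln 7 Ha Hg)) => x; exact: z8.
Qed.

Definition Q n (w : 'I_n -> Z8) (d : Z8) : op n :=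
  fun x => prodx x * (\sum_i w i * x i + d).

Lemma Q_ext (I : Type) (F : I -> arity_op) n (w w' : 'I_n -> Z8) d d' :
  (forall i, w i = w' i) -> d = d' -> clone_gen F (Q w d) -> clone_gen F (Q w' d').
Proof.
move=> Hw -> H; apply: (cg_ext H) => x; rewrite /Q.
by congr (_ * (_ + _)); apply: eq_bigr => i _; rewrite Hw.
Qed.

Lemma Q_add (I : Type) (F : I -> arity_op) n (w w' : 'I_n -> Z8) d d' :
  clone_gen F add_op -> clone_gen F (Q w d) -> clone_gen F (Q w' d') ->
  clone_gen F (Q (fun i => w i + w' i) (d + d')).
Proof.
move=> Ha H1 H2; apply: (cg_ext (cl_add Ha H1 H2)) => x; rewrite /Q.
rewrite -mulrDr; congr (_ * _).
rewrite addrACA -big_split /=; congr (_ + _); apply: eq_bigr => i _.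
by rewrite mulrDl.
Qed.

Lemma Q_neg (I : Type) (F : I -> arity_op) n (w : 'I_n -> Z8) d :
  clone_gen F add_op -> clone_gen F (Q w d) ->
  clone_gen F (Q (fun i => - w i) (- d)).
Proof.
move=> Ha H1; apply: (cg_ext (cl_neg Ha H1)) => x; rewrite /Q.
rewrite -mulrN; congr (_ * _).
rewrite opprD -sumrN; congr (_ + _); apply: eq_bigr => i _.
by rewrite mulNr.
Qed.

Lemma Q_sub (I : Type) (F : I -> arity_op) n (w w' : 'I_n -> Z8) d d' :
  clone_gen F add_op -> clone_gen F (Q w d) -> clone_gen F (Q w' d') ->
  clone_gen F (Q (fun i => w i - w' i) (d - d')).
Proof. by move=> Ha H1 H2; apply: Q_add => //; apply: Q_neg. Qed.

Lemma Q_perm (I : Type) (F : I -> arity_op) n (w : 'I_n -> Z8) d (s : {perm 'I_n}) :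
  clone_gen F (Q w d) -> clone_gen F (Q (fun i => w ((s^-1)%g i)) d).
Proof.
move=> H.
pose gs : 'I_n -> op n := fun j x => x (s j).
apply: (cg_ext (cg_comp (gs := gs) H _)); first by move=> j; exact: cg_proj.
move=> x; rewrite /Q /gs /prodx.
rewrite [X in _ = X * _](reindex_inj (@perm_inj _ s)).
congr (_ * (_ + _)).
rewrite [RHS](reindex_inj (@perm_inj _ s)); apply: eq_bigr => i _.
by rewrite permK.
Qed.

Lemma Q_flip (I : Type) (F : I -> arity_op) n (w : 'I_n -> Z8) d (l : 'I_n) :
  clone_gen F add_op -> clone_gen F (Q w d) ->
  clone_gen F (Q (fun i => if i == l then - w i else w i) d).
Proof.
move=> Ha H.
pose gs : 'I_n -> op n := fun j x => if j == l then - x j else x j.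
have Hc := cg_comp (gs := gs) H.
have Hc' : clone_gen F (fun x => Q w d (fun j => gs j x)).
  apply: Hc => j; rewrite /gs; case: eqP => _.
    by apply: (cl_neg Ha); exact: cg_proj.
  exact: cg_proj.
apply: (cg_ext (cl_neg Ha Hc')) => x; rewrite /Q /gs /prodx.
rewrite [X in - (X * _)](bigD1 l) //= [in RHS](bigD1 l) //= eqxx.
have -> : \prod_(i < n | i != l) (if i == l then - x i else x i) =
          \prod_(i < n | i != l) x i.
  by apply: eq_bigr => i /negbTE ->.
have -> : \sum_i w i * (if i == l then - x i else x i) =
          \sum_i (if i == l then - w i else w i) * x i.
  by apply: eq_bigr => i _; case: eqP => _; rewrite ?mulrN ?mulNr.
by rewrite mulNr mulNr opprK.
Qed.

Definition wset n (A : {set 'I_n}) (i : 'I_n) : Z8 := if i \in A then 2%:R else 0.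

Lemma sum_wset n (A : {set 'I_n}) (x : 'I_n -> Z8) :
  \sum_i wset A i * x i = 2%:R * \sum_(i in A) x i.
Proof.
rewrite [in RHS]big_mkcond mulr_sumr; apply: eq_bigr => i _.
by rewrite /wset; case: (i \in A); rewrite ?mul0r ?mulr0.
Qed.

Lemma perm_to n (j l a b : 'I_n) : j != l -> a != b ->
  exists s : {perm 'I_n}, s j = a /\ s l = b.
Proof.
move=> Hjl Hab.
pose s1 := tperm j a. pose l1 := s1 l.
have Hal1 : a != l1.
  by rewrite /l1 /s1 -{1}(tpermL j a) (inj_eq (@perm_inj _ _)).
exists (s1 * tperm l1 b)%g; rewrite !permM tpermL; split.
  by rewrite tpermD // eq_sym.
by rewrite tpermL.
Qed.

Lemma wset_perm n (A : {set 'I_n}) (s : {perm 'I_n}) i :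
  wset A ((s^-1)%g i) = wset (s @: A) i.
Proof.
rewrite /wset; congr (if _ then _ else _).
apply/idP/idP.
  by move=> H; apply/imsetP; exists ((s^-1)%g i) => //; rewrite permKV.
by case/imsetP => y Hy ->; rewrite permK.
Qed.

Lemma Q_permset (I : Type) (F : I -> arity_op) n (A : {set 'I_n}) d (s : {perm 'I_n}) :
  clone_gen F (Q (wset A) d) -> clone_gen F (Q (wset (s @: A)) d).
Proof.
move=> H; apply: Q_ext (Q_perm s H) => // i; exact: wset_perm.
Qed.

Lemma Q_pair_all (I : Type) (F : I -> arity_op) n (j l : 'I_n) :
  j != l -> clone_gen F (Q (wset [set j; l]) 0) ->
  forall a b : 'I_n, a != b -> clone_gen F (Q (wset [set a; b]) 0).
Proof.
move=> Hjl H a b Hab; have [s [Hs1 Hs2]] := perm_to Hjl Hab.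
have := Q_permset s H; by rewrite imsetU !imset_set1 Hs1 Hs2.
Qed.

Lemma Q_single_all (I : Type) (F : I -> arity_op) n (j : 'I_n) d :
  clone_gen F (Q (wset [set j]) d) ->
  forall a : 'I_n, clone_gen F (Q (wset [set a]) d).
Proof.
move=> H a; have := Q_permset (tperm j a) H; by rewrite imset_set1 tpermL.
Qed.

Lemma wset_split n (A : {set 'I_n}) a : a \in A ->
  forall i, wset A i = wset [set a] i + wset (A :\ a) i.
Proof.
move=> Ha i; rewrite /wset !inE; case: (eqVneq i a) => [->|_] /=.
  by rewrite Ha addr0.
by rewrite add0r.
Qed.

Lemma wset_pair n (a b : 'I_n) : a != b ->
  forall i, wset [set a; b] i = wset [set a] i + wset [set b] i.
Proof.
move=> Hab i; rewrite /wset !inE; case: (eqVneq i a) => [->|_] /=.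
  by rewrite (negbTE Hab) addr0.
by rewrite add0r.
Qed.

Lemma Q_zero (I : Type) (F : I -> arity_op) n (g : op n) :
  clone_gen F add_op -> clone_gen F g -> clone_gen F (Q (wset (set0 : {set 'I_n})) 0).
Proof.
move=> Ha Hg; apply: (cg_ext (cl_zero Ha Hg)) => x.
by rewrite /Q sum_wset big_set0 mulr0 addr0 mulr0.
Qed.

Lemma Q_even (I : Type) (F : I -> arity_op) n (g : op n) :
  clone_gen F add_op -> clone_gen F g ->
  (forall a b : 'I_n, a != b -> clone_gen F (Q (wset [set a; b]) 0)) ->
  forall m (A : {set 'I_n}), #|A| = m.*2 -> clone_gen F (Q (wset A) 0).
Proof.
move=> Ha Hg Hp; elim=> [|m IH] A HA.
  by rewrite (cards0_eq HA); exact: Q_zero Ha Hg.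
have : A != set0 by rewrite -card_gt0 HA.
case/set0Pn => a Ha'.
have HA1 : #|A :\ a| = (m.*2).+1.
  by move: HA; rewrite (cardsD1 a A) Ha' doubleS add1n => -[].
have : A :\ a != set0 by rewrite -card_gt0 HA1.
case/set0Pn => b Hb.
have HA2 : #|A :\ a :\ b| = m.*2.
  by move: HA1; rewrite (cardsD1 b (A :\ a)) Hb add1n => -[].
have Hba : b != a by move: Hb; rewrite !inE => /andP[].
have Hab : a != b by rewrite eq_sym.
apply: (Q_ext _ _ (Q_add Ha (Hp a b Hab) (IH _ HA2))).
  move=> i.
  by rewrite (wset_split Ha' i) (wset_split Hb i) (wset_pair Hab) addrA.
by rewrite addr0.
Qed.

Lemma var_ord n (x : 'I_n -> Z8) i (h : (i < n)%N) : var x i = x (Ordinal h).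
Proof.
rewrite /var; case: insubP => [j _ Hj|]; last by rewrite h.
by congr x; apply/val_inj.
Qed.

Lemma Q_f n (b : 'I_n -> bool) (c : bool) x :
  f_op b c x = Q (wset [set j | b j]) (if c then 2%:R else 0) x.
Proof.
rewrite /f_op /Q sum_wset.
have -> : \sum_i (b i)%:R * x i = \sum_(i in [set j | b j]) x i.
  rewrite [RHS]big_mkcond; apply: eq_bigr => i _; rewrite inE.
  by case: (b i); rewrite ?mul1r ?mul0r.
by case: c => /=; ring.
Qed.

Lemma Q_v n (h0 : (0 < n)%N) (h1 : (1 < n)%N) x :
  dbl (@v_op n) x = Q (wset [set Ordinal h0; Ordinal h1]) 0 x.
Proof.
rewrite /dbl /v_op /Q sum_wset (var_ord x h0) (var_ord x h1).
rewrite big_setU1 ?big_set1 /=; last by rewrite inE.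
by rewrite addr0 mulrCA.
Qed.

Lemma Q_r n x : dbl (@r_op n) x = Q (wset (set0 : {set 'I_n})) 2%:R x.
Proof. by rewrite /dbl /r_op /Q sum_wset big_set0 mulr0 add0r mulrC. Qed.

Lemma Q_u n (h0 : (0 < n)%N) x :
  dbl (@u_op n) x = Q (wset [set Ordinal h0]) 2%:R x.
Proof.
rewrite /dbl /u_op /Q sum_wset (var_ord x h0) big_set1.
by rewrite mulrCA mulrDr mulr1.
Qed.

Lemma Q_p n (h0 : (0 < n)%N) x :
  dbl (@p_op n) x = Q (wset [set Ordinal h0]) 0 x.
Proof.
rewrite /dbl /p_op /Q sum_wset (var_ord x h0) big_set1.
by rewrite addr0 mulrA [_ * prodx x]mulrC mulrA.
Qed.

Lemma Q_diff (I : Type) (F : I -> arity_op) n (w1 w2 : 'I_n -> Z8) d (j l : 'I_n) :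
  clone_gen F add_op -> clone_gen F (Q w1 d) -> clone_gen F (Q w2 d) -> j != l ->
  (forall i, w1 i - w2 i = if i == j then 2%:R else if i == l then - 2%:R else 0) ->
  clone_gen F (Q (wset [set j; l]) 0).
Proof.
move=> Ha H1 H2 Hjl Hw.
apply: (Q_ext _ _ (Q_flip l Ha (Q_sub Ha H1 H2))); last exact: subrr.
move=> i; rewrite Hw /wset !inE.
case: (eqVneq i j) => [->|Hij]; first by rewrite (negbTE Hjl).
by case: (eqVneq i l) => //; rewrite opprK.
Qed.

Lemma C_sub (I : Type) (F : I -> arity_op) k (g : op k) :
  clone_gen F g -> clone_gen F add_op -> (forall a, clone_gen F (const_op a)) ->
  forall m (h : op m), C g h -> clone_gen F h.
Proof. move=> Hg Ha Hc m h; apply: cg_mono; case=> [[a|]|] /=; [exact: Hc | exact: Ha | exact: Hg]. Qed.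

Lemma join_l (A B : opset) k (g : op k) : A k g -> @clone_join A B k g.
Proof.
move=> H.
exact: (@cg_gen _ _ (exist (fun o : arity_op => A (projT1 o) (projT2 o) \/ B (projT1 o) (projT2 o)) (existT _ k g) (or_introl H))).
Qed.

Lemma join_r (A B : opset) k (g : op k) : B k g -> @clone_join A B k g.
Proof.
move=> H.
exact: (@cg_gen _ _ (exist (fun o : arity_op => A (projT1 o) (projT2 o) \/ B (projT1 o) (projT2 o)) (existT _ k g) (or_intror H))).
Qed.

Lemma join_sub (A B : opset) (I : Type) (F : I -> arity_op) :
  (forall k (g : op k), A k g -> clone_gen F g) ->
  (forall k (g : op k), B k g -> clone_gen F g) ->
  forall k (g : op k), @clone_join A B k g -> clone_gen F g.
Proof.
move=> HA HB; apply: cg_mono; case=> [[k g] [H|H]] /=; [exact: HA | exact: HB].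
Qed.

Lemma Q_odd_join (I : Type) (F : I -> arity_op) n (K : {set 'I_n}) j d :
  j \in K -> clone_gen F add_op -> clone_gen F (Q (wset [set j]) d) ->
  clone_gen F (Q (wset (K :\ j)) 0) -> clone_gen F (Q (wset K) d).
Proof.
move=> Hj Ha H1 H2; apply: (Q_ext _ _ (Q_add Ha H1 H2)); last exact: addr0.
by move=> i; rewrite (wset_split Hj i).
Qed.

Lemma Q_odd_get (I : Type) (F : I -> arity_op) n (K : {set 'I_n}) j d :
  j \in K -> clone_gen F add_op -> clone_gen F (Q (wset K) d) ->
  clone_gen F (Q (wset (K :\ j)) 0) -> clone_gen F (Q (wset [set j]) d).
Proof.
move=> Hj Ha H1 H2; apply: (Q_ext _ _ (Q_sub Ha H1 H2)); last exact: subr0.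
by move=> i; rewrite (wset_split Hj i) addrK.
Qed.

Lemma even_card (T : finType) (A : {set T}) : ~~ odd #|A| -> #|A| = (#|A|./2).*2.
Proof. by move=> H; rewrite halfK (negbTE H) subn0. Qed.
Unset Implicit Arguments.

Theorem theorem4p2 (n : nat) (b : 'I_n -> bool) (c : bool) :
  (1 <= n)%N -> (exists j, b j) ->
  let f := f_op b c in
  let K := [set j | b j] in
  (K = [set: 'I_n] ->
     (forall x, f x = dbl (@t_op n) x) \/ (forall x, f x = dbl (@s_op n) x)) /\
  ((1 <= #|K| < n)%N -> @C n f n (dbl (@v_op n))) /\
  ((1 <= #|K| < n)%N -> ~~ odd #|K| ->
     clone_eq (C f) (C (dbl (@v_op n))) \/
     clone_eq (C f) (clone_join (C (dbl (@v_op n))) (C (dbl (@r_op n))))) /\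
  ((1 <= #|K| < n)%N -> odd #|K| ->
     clone_eq (C f) (C (dbl (@u_op n))) \/ clone_eq (C f) (C (dbl (@p_op n)))).
Proof.
move=> Hn [j0 Hj0] f K.
have Hi : (K = [set: 'I_n] ->
     (forall x, f x = dbl (@t_op n) x) \/ (forall x, f x = dbl (@s_op n) x)).
  move=> HKT.
  have Hb : forall i, b i by move=> i; have := in_setT i; rewrite -HKT inE.
  have Hs : forall x : 'I_n -> Z8, \sum_(i < n) (b i)%:R * x i = sumx x.
    by move=> x; apply: eq_bigr => i _; rewrite Hb mul1r.
  rewrite /f /f_op /dbl /t_op /s_op.
  case: c @f => f; case: (odd n); [left|right|right|left] => x /=; by rewrite Hs mulrA ?addr0.
have Hj0K : j0 \in K by rewrite inE.
pose dc : Z8 := if c then 2%:R else 0.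
have HaF : C f add_op by exact: (@cg_gen _ _ (Some None)).
have HcF : forall a, C f (const_op a) by move=> a; exact: (@cg_gen _ _ (Some (Some a))).
have HfQ : C f (Q (wset K) dc).
  apply: (cg_ext (@cg_gen _ _ None)) => x /=; exact: Q_f.
have pairsF : (1 <= #|K| < n)%N -> forall a b : 'I_n, a != b -> C f (Q (wset [set a; b]) 0).
  move=> /andP[_ HKn].
  case: (pickP (fun l => ~~ b l)) => [l Hl | H]; last first.
    have HKT : K = [set: 'I_n].
      by apply/setP => i; rewrite !inE; move: (H i) => /= /negbFE.
    by move: HKn; rewrite HKT cardsT card_ord ltnn.
  have Hjl : j0 != l by apply/eqP => E; move: Hl; rewrite -E Hj0.
  apply: (Q_pair_all Hjl).
  apply: (Q_diff HaF HfQ (Q_perm (tperm j0 l) HfQ) Hjl) => i.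
  rewrite tpermV /wset !inE.
  case: (eqVneq i j0) => [->|Hij]; first by rewrite tpermL Hj0 (negbTE Hl) ?eqxx ?subr0.
  case: (eqVneq i l) => [->|Hil]; first by rewrite tpermR Hj0 (negbTE Hl) sub0r ?eqxx.
  by rewrite tpermD 1?eq_sym // subrr.
have Hii : (1 <= #|K| < n)%N -> C f (dbl (@v_op n)).
  move=> Hk; have h1 : (1 < n)%N by case/andP: Hk; apply: leq_ltn_trans.
  have h0 : (0 < n)%N := Hn.
  have Hne : Ordinal h0 != Ordinal h1 by [].
  apply: (cg_ext (pairsF Hk _ _ Hne)) => x; by rewrite Q_v.
split; first exact: Hi.
split; first exact: Hii.
split.
  move=> Hk Hev.
  have h1 : (1 < n)%N by case/andP: Hk; apply: leq_ltn_trans.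
  have h0 : (0 < n)%N := Hn.
  have HaV : C (dbl (@v_op n)) add_op by exact: (@cg_gen _ _ (Some None)).
  have HcV : forall a, C (dbl (@v_op n)) (const_op a)
    by move=> a; exact: (@cg_gen _ _ (Some (Some a))).
  have HvV : C (dbl (@v_op n)) (dbl (@v_op n)) by exact: (@cg_gen _ _ None).
  have Hne : Ordinal h0 != Ordinal h1 by [].
  have pairsV : forall a b : 'I_n, a != b -> C (dbl (@v_op n)) (Q (wset [set a; b]) 0).
    apply: (Q_pair_all Hne); apply: (cg_ext HvV) => x; exact: Q_v.
  have HKV : C (dbl (@v_op n)) (Q (wset K) 0) := Q_even HaV HvV pairsV (even_card Hev).
  have HKF : C f (Q (wset K) 0) := Q_even HaF HfQ (pairsF Hk) (even_card Hev).
  have CVF : forall m (h : op m), C (dbl (@v_op n)) h -> C f h.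
    exact: (C_sub (Hii Hk) HaF HcF).
  have [Hdc|Hdc] : dc = 2%:R \/ dc = 0 by rewrite /dc; case: (c); [left|right].
    right; split.
      have HrR : C (dbl (@r_op n)) (Q (wset (set0 : {set 'I_n})) 2%:R).
        apply: (cg_ext (@cg_gen _ _ None)) => x /=; exact: Q_r.
      have HrJ := join_r (C (dbl (@v_op n))) HrR.
      have HKJ := join_l (C (dbl (@r_op n))) HKV.
      have HaJ := join_l (C (dbl (@r_op n))) HaV.
      apply: C_sub.
      - apply: (cg_ext (Q_ext (w' := wset K) (d' := dc) _ _ (Q_add HaJ HKJ HrJ))).
        + by move=> i; rewrite /wset !inE addr0.
        + by rewrite add0r.
        by move=> x; rewrite /f Q_f -/dc Hdc.
      - exact: join_l.
      - move=> a; exact: join_l.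
    apply: join_sub => // m h; apply: C_sub => //.
    apply: (cg_ext (Q_ext (w' := wset (set0 : {set 'I_n})) (d' := 2%:R) _ _ (Q_sub HaF HfQ HKF))).
    + by move=> i; rewrite subrr /wset !inE.
    + by rewrite Hdc subr0.
    by move=> x; rewrite Q_r.
  left; split; last exact: CVF.
  apply: C_sub => //.
  apply: (cg_ext (Q_ext (w' := wset K) (d' := dc) _ _ HKV)) => // x; by rewrite /f Q_f.
move=> Hk Hodd.
have h0 : (0 < n)%N := Hn.
have HevK : ~~ odd #|K :\ j0| by move: Hodd; rewrite (cardsD1 j0 K) Hj0K.
have HKF : C f (Q (wset (K :\ j0)) 0) := Q_even HaF HfQ (pairsF Hk) (even_card HevK).
have HsF : C f (Q (wset [set Ordinal h0]) dc).
  exact: (Q_single_all (Q_odd_get Hj0K HaF HfQ HKF)).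
have [Hdc|Hdc] : dc = 2%:R \/ dc = 0 by rewrite /dc; case: (c); [left|right].
  left; split.
    have HaU : C (dbl (@u_op n)) add_op by exact: (@cg_gen _ _ (Some None)).
    have HuU : C (dbl (@u_op n)) (dbl (@u_op n)) by exact: (@cg_gen _ _ None).
    have sU : forall a : 'I_n, C (dbl (@u_op n)) (Q (wset [set a]) 2%:R).
      apply: (Q_single_all (j := Ordinal h0)); apply: (cg_ext HuU) => x; exact: Q_u.
    have pU : forall a1 b1 : 'I_n, a1 != b1 -> C (dbl (@u_op n)) (Q (wset [set a1; b1]) 0).
      move=> a1 b1 Hab; apply: (Q_diff HaU (sU a1) (sU b1) Hab) => i.
      rewrite /wset !inE; case: (eqVneq i a1) => [->|Hia].
        by rewrite (negbTE Hab) subr0.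
      by case: (eqVneq i b1) => _; rewrite ?sub0r ?oppr0.
    have HcU : forall a, C (dbl (@u_op n)) (const_op a)
      by move=> a; exact: (@cg_gen _ _ (Some (Some a))).
    apply: (C_sub _ HaU HcU).
    apply: (cg_ext (Q_odd_join Hj0K HaU (sU j0) (Q_even HaU HuU pU (even_card HevK)))).
    by move=> x; rewrite /f Q_f -/dc Hdc.
  apply: (C_sub _ HaF HcF); apply: (cg_ext HsF) => x; by rewrite Q_u Hdc.
right; split.
  have HaP : C (dbl (@p_op n)) add_op by exact: (@cg_gen _ _ (Some None)).
  have HpP : C (dbl (@p_op n)) (dbl (@p_op n)) by exact: (@cg_gen _ _ None).
  have sP : forall a : 'I_n, C (dbl (@p_op n)) (Q (wset [set a]) 0).
    apply: (Q_single_all (j := Ordinal h0)); apply: (cg_ext HpP) => x; exact: Q_p.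
  have pP : forall a1 b1 : 'I_n, a1 != b1 -> C (dbl (@p_op n)) (Q (wset [set a1; b1]) 0).
    move=> a1 b1 Hab; apply: (Q_ext _ _ (Q_add HaP (sP a1) (sP b1))).
      by move=> i; rewrite (wset_pair Hab).
    exact: addr0.
  have HcP : forall a, C (dbl (@p_op n)) (const_op a)
    by move=> a; exact: (@cg_gen _ _ (Some (Some a))).
  apply: (C_sub _ HaP HcP).
  apply: (cg_ext (Q_odd_join Hj0K HaP (sP j0) (Q_even HaP HpP pP (even_card HevK)))).
  by move=> x; rewrite /f Q_f -/dc Hdc.
apply: (C_sub _ HaF HcF); apply: (cg_ext HsF) => x; by rewrite Q_p Hdc.
Qed.
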